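(* Let $-1<n<1$, $\delta=n+1$, and let $m$ be a minimizer for $f_L(n)$ that is not constant. Then $$\max_\Omega m\ge 1-\delta-2\sqrt{\delta}\sqrt{1-\delta/2}.$$
   Context: $\Omega$ is the flat torus $\mathbb R^d/(L\mathbb Z)^d$, $d\ge2$. $F(m)=\frac14(m^2-1)^2$, $\mathcal F(m)=\frac12\int_\Omega|\nabla m|^2dx+\int_\Omega F(m)dx$ for $m\in H^1(\Omega)$, and $f_L(n)=\inf\{\mathcal F(m):m\in H^1(\Omega),\ L^{-d}\int_\Omega m\,dx=n\}$; a minimizer is an admissible $m$ attaining the infimum (minimizers are smooth). *)

(* Defs.v *)
From HB Require Import structures.
From mathcomp Require Import all_boot all_order all_algebra.
From mathcomp Require Import all_classical all_reals all_analysis.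
Set Implicit Arguments. Unset Strict Implicit. Unset Printing Implicit Defensive.
Import Order.TTheory GRing.Theory Num.Theory.
Import numFieldNormedType.Exports.
Local Open Scope classical_set_scope.
Local Open Scope ring_scope.

Definition Fpot {R : realType} (s : R) : R := (s ^+ 2 - 1) ^+ 2 / 4.

Definition evec {R : realType} {d : nat} (i : 'I_d) : 'rV[R]_d := delta_mx 0 i.

Fixpoint iter_int {R : realType} (L : R) (k : nat) (g : seq R -> R) : R :=
  match k with
  | 0 => g [::]
  | k'.+1 => Rintegral (@lebesgue_measure R) `[0, L]
               (fun t => iter_int L k' (fun s => g (t :: s)))
  end.

(* integral over the fundamental cell [0,L]^d of the torus (R/LZ)^d *)
Definition torus_int {R : realType} (d : nat) (L : R) (g : 'rV[R]_d -> R) : R :=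
  iter_int L d (fun s => g (\row_(i < d) nth 0 s i)).

(* functions on the torus: L-periodic in every coordinate *)
Definition periodic {R : realType} (d : nat) (L : R) (m : 'rV[R]_d -> R) :=
  forall (x : 'rV[R]_d) (i : 'I_d), m (x + L *: evec i) = m x.

Definition admissible {R : realType} (d : nat) (L : R) (m : 'rV[R]_d -> R) :=
  [/\ periodic L m,
      (forall x, differentiable m x) &
      (forall i : 'I_d, continuous (fun x => 'D_(evec i) m x))].

Definition grad_sq {R : realType} (d : nat) (m : 'rV[R]_d -> R) (x : 'rV[R]_d) : R :=
  \sum_(i < d) ('D_(evec i) m x) ^+ 2.

Definition energy {R : realType} (d : nat) (L : R) (m : 'rV[R]_d -> R) : R :=
  torus_int L (fun x => grad_sq m x / 2) + torus_int L (fun x => Fpot (m x)).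

Definition mean {R : realType} (d : nat) (L : R) (m : 'rV[R]_d -> R) : R :=
  torus_int L m / L ^+ d.

Definition minimizer {R : realType} (d : nat) (L n : R) (m : 'rV[R]_d -> R) :=
  [/\ admissible L m, mean L m = n &
      forall m' : 'rV[R]_d -> R, admissible L m' -> mean L m' = n ->
        energy L m <= energy L m'].

(* Main.v *)
Require Import Defs.
From HB Require Import structures.
From mathcomp Require Import all_boot all_order all_algebra.
From mathcomp Require Import all_classical all_reals all_analysis.
From mathcomp Require Import ring lra.
Import Order.TTheory GRing.Theory Num.Theory.
Import numFieldNormedType.Exports.
Local Open Scope classical_set_scope.
Local Open Scope ring_scope.
Section Iter.
Variable R : realType.
Variable L : R.
Hypothesis L0 : 0 < L.
Notation mu := (@lebesgue_measure R).
Notation D := (`[0, L]%classic : set R).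
Notation I := (@iter_int R L).

Definition cell k (s : seq R) := (size s == k) && all (fun t => 0 <= t <= L) s.

Definition UC k (g : seq R -> R) := forall e : R, 0 < e -> exists2 dl : R, 0 < dl &
  forall s s', cell k s -> cell k s' ->
    (forall i, (i < k)%N -> `|nth 0 s i - nth 0 s' i| < dl) -> `|g s - g s'| < e.

Lemma cellS k t s : cell k.+1 (t :: s) = (0 <= t <= L) && cell k s.
Proof. by rewrite /cell /= eqSS andbCA. Qed.

Lemma inD t : D t <-> 0 <= t <= L.
Proof. by rewrite /= in_itv. Qed.

Lemma UC_sec k g t : 0 <= t <= L -> UC k.+1 g -> UC k (fun s => g (t :: s)).
Proof.
move=> ht ug e e0; have [dl dl0 H] := ug e e0; exists dl => // s s' cs cs' hs.
apply: H; rewrite ?cellS ?ht //.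
by case=> [|i] /=; [rewrite subrr normr0 | exact: hs].
Qed.

Lemma minle1 (x y : R) : Num.min x y <= x.
Proof. by rewrite ge_min lexx. Qed.
Lemma minle2 (x y : R) : Num.min x y <= y.
Proof. by rewrite ge_min lexx orbT. Qed.

Lemma UC_B k g1 g2 : UC k g1 -> UC k g2 -> UC k (fun s => g1 s - g2 s).
Proof.
move=> u1 u2 e e0; have e20 : 0 < e / 2 by rewrite divr_gt0.
have [d1 d10 H1] := u1 _ e20; have [d2 d20 H2] := u2 _ e20.
exists (Num.min d1 d2); first by rewrite lt_min d10 d20.
move=> s s' cs cs' hs.
have h1 := H1 s s' cs cs' (fun i hi => lt_le_trans (hs i hi) (minle1 _ _)).
have h2 := H2 s s' cs cs' (fun i hi => lt_le_trans (hs i hi) (minle2 _ _)).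
rewrite (_ : _ - _ = (g1 s - g1 s') - (g2 s - g2 s')); last by ring.
apply: le_lt_trans (ler_normB _ _) _.
by rewrite (splitr e) ltrD.
Qed.

Lemma UC_cst k c : UC k (fun _ => c).
Proof. by move=> e e0; exists 1 => // *; rewrite subrr normr0. Qed.

Lemma UC_Z k c g : UC k g -> UC k (fun s => c * g s).
Proof.
move=> ug e e0; have e1 : 0 < e / (`|c| + 1) by rewrite divr_gt0 // ltr_pwDr.
have [dl dl0 H] := ug _ e1; exists dl => // s s' cs cs' hs.
rewrite -mulrBr normrM.
have := H s s' cs cs' hs; rewrite ltr_pdivlMr ?ltr_pwDr // => h.
apply: le_lt_trans h; rewrite mulrDr mulr1 ler_wpDr //.
by rewrite mulrC.
Qed.

Lemma iter_ge0 k g : (forall s, cell k s -> 0 <= g s) -> 0 <= I k g.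
Proof.
elim: k g => [|k IH] g hg /=; first by apply: hg.
apply: Rintegral_ge0 => t /inD ht; apply: IH => s cs; apply: hg.
by rewrite cellS ht.
Qed.

Lemma iter_cst k c : I k (fun _ => c) = c * L ^+ k.
Proof.
elim: k c => [|k IH] c /=; first by rewrite expr0 mulr1.
under eq_Rintegral do rewrite IH.
rewrite Rintegral_cst //.
have -> : fine (mu D) = L.
  by rewrite (lebesgue_measure_itv `[0, L]) /= lte_fin L0 /= subr0.
by rewrite exprS; ring.
Qed.

Lemma bound_I k f c :
  (forall g1 g2, UC k g1 -> UC k g2 ->
     I k (fun s => g1 s - g2 s) = I k g1 - I k g2) ->
  UC k f -> (forall s, cell k s -> `|f s| <= c) -> `|I k f| <= c * L ^+ k.
Proof.
move=> LB uf hf.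
have h1 : 0 <= I k (fun s => c - f s).
  apply: iter_ge0 => s cs; rewrite subr_ge0.
  exact: le_trans (ler_norm _) (hf s cs).
have h2 : 0 <= I k (fun s => c - (0 - f s)).
  apply: iter_ge0 => s cs; rewrite sub0r opprK.
  have := hf s cs; rewrite ler_norml; lra.
rewrite LB ?iter_cst in h1; [|exact: UC_cst|exact: uf].
rewrite LB ?iter_cst in h2; [|exact: UC_cst|exact: UC_B (UC_cst _ _) uf].
rewrite LB ?iter_cst in h2; [|exact: UC_cst|exact: uf].
move: h2; rewrite mul0r => h2.
rewrite ler_norml; apply/andP; split; lra.
Qed.

Definition LinBk k := forall g1 g2, UC k g1 -> UC k g2 ->
     I k (fun s => g1 s - g2 s) = I k g1 - I k g2.

Lemma cont_sec k g : LinBk k -> UC k.+1 g ->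
  {within D, continuous (fun t => I k (fun s => g (t :: s)))}.
Proof.
move=> LB ug; apply/subspace_continuousP => x /inD Dx.
apply/cvgrPdist_lt => e e0.
have Lkp : 0 < L ^+ k := exprn_gt0 _ L0.
have Lk : 0 < L ^+ k + 1 by lra.
have e1 : 0 < e / (L ^+ k + 1) by rewrite divr_gt0.
have [dl dl0 H] := ug _ e1.
apply/nbhs_ballP; exists dl => //= t bt /inD Dt.
rewrite -LB; [|exact: UC_sec|exact: UC_sec].
apply: le_lt_trans (@bound_I k _ (e / (L ^+ k + 1)) LB _ _) _.
- by apply: UC_B; apply: UC_sec.
- move=> s cs; apply/ltW/H; rewrite ?cellS ?Dx ?Dt //.
  case=> [|i] hi /=; last by rewrite subrr normr0.
  by move: bt; rewrite /ball /=.
- rewrite mulrAC ltr_pdivrMr // ltr_pM2l //; lra.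
Qed.

Lemma int_sec k g : LinBk k -> UC k.+1 g ->
  mu.-integrable D (EFin \o (fun t => I k (fun s => g (t :: s)))).
Proof.
move=> LB ug; apply: continuous_compact_integrable.
  exact: segment_compact.
exact: cont_sec.
Qed.

Lemma LinB k : LinBk k.
Proof.
elim: k => [|k IH] g1 g2 u1 u2 //=.
rewrite -RintegralB //; [|exact: int_sec|exact: int_sec].
apply: eq_Rintegral => t; rewrite inE => /inD Dt.
by rewrite IH //; apply: UC_sec.
Qed.

Lemma pos1 (h : R -> R) t0 : {within D, continuous h} ->
  (forall t, D t -> 0 <= h t) -> D t0 -> 0 < h t0 ->
  0 < Rintegral mu D h.
Proof.
move=> ch h0 Dt0 ht0.
have hi : mu.-integrable D (EFin \o h).
  by apply: continuous_compact_integrable => //; exact: segment_compact.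
move/subspace_continuousP: ch => /(_ t0 Dt0) /cvgrPdist_lt.
have c0 : 0 < h t0 / 2 by rewrite divr_gt0.
move=> /(_ _ c0) /nbhs_ballP [dl /= dl0 Hdl].
move/inD: Dt0 => /andP [t00 t0L].
have r0 : 0 < dl / 2 by rewrite divr_gt0.
have rdl : dl / 2 < dl by rewrite ltr_pdivrMr // ltr_pMr //; lra.
move: r0 rdl; set r := dl / 2 => r0 rdl.
pose a : R := Num.max (0 : R) (t0 - r : R); pose b : R := Num.min (L : R) (t0 + r : R).
have ab : a < b.
  rewrite /a /b gt_max !lt_min; apply/and3P; split; [apply/andP; split| |]; try exact: L0; lra.
pose J := (`[a, b]%classic : set R).
have JD : J `<=` D.
  move=> t; rewrite /J /= !in_itv /= => /andP [ha hb]; apply/andP; split.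
    by apply: le_trans ha; rewrite /a le_max lexx.
  by apply: le_trans hb _; rewrite /b ge_min lexx.
have Jh : forall t, J t -> h t0 / 2 <= h t.
  move=> t Jt.
  have Dt := JD _ Jt.
  move: Jt; rewrite /J /= !in_itv /= => /andP [ha hb].
  have := Hdl t; rewrite /ball /= => /(_ _ Dt).
  have : `|t0 - t| < dl.
    move: ha hb; rewrite /a /b ge_max le_min => /andP[ha1 ha2] /andP[hb1 hb2].
    rewrite ltr_norml; apply/andP; split; lra.
  move=> /[swap] /[apply]; rewrite ltr_norml /from_subspace /= => /andP[_]; lra.
have mJ : measurable J by exact: measurable_itv.
have mD : measurable D by exact: measurable_itv.
rewrite -(setDUK JD).
rewrite (@Rintegral_setU _ _ _ mu J (D `\` J) h) //; first last.
- by apply/disj_setPS => x [Jx [_ nJx]].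
- by rewrite setDUK.
- exact: measurableD.
have hJ : mu.-integrable J (EFin \o h) by exact: integrableS hi.
have cJ : mu.-integrable J (EFin \o (fun=> h t0 / 2)).
  apply: continuous_compact_integrable; first exact: segment_compact.
  by apply: continuous_subspaceT => x; exact: cst_continuous.
have := @le_Rintegral _ _ _ mu J (fun=> h t0 / 2) h mJ cJ hJ Jh.
rewrite Rintegral_cst //.
have -> : fine (mu J) = b - a.
  by rewrite (lebesgue_measure_itv `[a, b]) /= lte_fin ab.
have : 0 <= Rintegral mu (D `\` J) h.
  by apply: Rintegral_ge0 => t [Dt _]; exact: h0.
have : 0 < h t0 / 2 * (b - a) by rewrite mulr_gt0 // subr_gt0.
lra.
Qed.

Lemma posI k g s0 : UC k g -> (forall s, cell k s -> 0 <= g s) ->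
  cell k s0 -> 0 < g s0 -> 0 < I k g.
Proof.
elim: k g s0 => [|k IH] g s0 ug g0 cs0 gs0 /=.
  by case: s0 cs0 gs0 => [|? ?] //.
case: s0 cs0 gs0 => [|t0 s0] //; rewrite cellS => /andP [ht0 cs0] gs0.
apply: (@pos1 _ t0).
- by apply: cont_sec => //; exact: LinB.
- move=> t /inD Dt; apply: iter_ge0 => s cs; apply: g0.
  by rewrite cellS Dt.
- exact/inD.
- apply: (IH _ s0) => //; first exact: UC_sec.
  by move=> s cs; apply: g0; rewrite cellS ht0.
Qed.

Lemma LinZ k c g : UC k g -> I k (fun s => c * g s) = c * I k g.
Proof.
elim: k g => [|k IH] g ug //=.
rewrite -RintegralZl //; last by apply: int_sec => //; exact: LinB.
apply: eq_Rintegral => t; rewrite inE => /inD Dt.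
by rewrite IH //; apply: UC_sec.
Qed.
End Iter.

Lemma HC (R : realType) (d : nat) (K : set 'rV[R]_d) (f : 'rV[R]_d -> R) :
  compact K -> continuous f -> forall e : R, 0 < e -> exists2 dl : R, 0 < dl &
  forall x y : 'rV[R]_d, K x -> (forall i, `|x ord0 i - y ord0 i| < dl) -> `|f x - f y| < e.
Proof.
move=> cK cf e e0.
have e2 : 0 < e / 2 by rewrite divr_gt0.
pose P := fun (dl : R) (x : 'rV[R]_d) =>
  forall y : 'rV[R]_d, (forall i, `|x ord0 i - y ord0 i| < dl) -> `|f x - f y| < e.
have H : \forall dl \near (0:R)^'+, K `<=` P dl.
  apply: (compact_near_coveringP K).1 => // x Kx.
  have H0 := @cvgr_dist_lt _ _ _ (nbhs x) _ f (f x) (cf x) _ e2.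
  have [r /= r0 Hr] := (nbhs_ballP _ _).1 (H0 _).
  have r2 : 0 < r / 2 by rewrite divr_gt0.
  exists (ball x (r / 2) : set 'rV[R]_d, (fun dl : R => 0 < dl < r / 2) : set R).
    split; first exact: nbhsx_ballx.
    near=> dl; apply/andP; split; near: dl; [exact: nbhs_right_gt| exact: nbhs_right_lt].
  case=> x' dl /= [bx' /andP[dl0 dlr]] y hy.
  move: bx'; rewrite /ball /= => -[_ bx].
  have hx' : ball x r x'.
    rewrite /ball /=; split => // i j; have := bx i j; rewrite /ball /=.
    move=> h; apply: lt_trans h _; rewrite ltr_pdivrMr //; lra.
  have hy' : ball x r y.
    rewrite /ball /=; split => // i j; rewrite /ball /=.
    have := bx i j; rewrite /ball /= (ord1 i) => h1; have h2 := hy j.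
    rewrite (_ : x ord0 j - y ord0 j = (x ord0 j - x' ord0 j) + (x' ord0 j - y ord0 j)); last by ring.
    apply: le_lt_trans (ler_normD _ _) _.
    rewrite [r](splitr r); apply: ltrD => //; lra.
  have := Hr _ hx'; have := Hr _ hy'.
  rewrite (_ : f x' - f y = (f x - f y) - (f x - f x')); last by ring.
  move=> h1 h2; apply: le_lt_trans (ler_normB _ _) _.
  rewrite [e](splitr e); exact: ltrD.
have [dl [dl0 Hdl]] : exists dl : R, 0 < dl /\ K `<=` P dl.
  apply: (@filter_ex _ ((0:R)^'+)); near=> dl; split; near: dl; [exact: nbhs_right_gt | exact: H].
exists dl => // x y Kx hxy; exact: Hdl.
Unshelve. all: by end_near.
Qed.

Lemma evecE (R : realType) (d : nat) (i j : 'I_d) :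
  (@evec R d i) ord0 j = (i == j)%:R.
Proof. by rewrite /evec mxE /= eq_sym. Qed.

Lemma shiftN (R : realType) (d : nat) (L : R) (m : 'rV[R]_d -> R) :
  @Defs.periodic R d L m -> forall (k : nat) x i, m (x + (k%:R * L) *: evec i) = m x.
Proof.
move=> per; elim=> [|k IH] x i; first by rewrite mul0r scale0r addr0.
by rewrite -natr1 mulrDl mul1r scalerDl addrA per IH.
Qed.

Lemma shiftZ (R : realType) (d : nat) (L : R) (m : 'rV[R]_d -> R) :
  @Defs.periodic R d L m -> forall (z : int) x i, m (x + (z%:~R * L) *: evec i) = m x.
Proof.
move=> per [k|k] x i; first by rewrite -pmulrn shiftN.
rewrite NegzE mulrNz mulNr scaleNr.
set y := x - _.
have -> : x = y + ((k.+1)%:R * L) *: evec i by rewrite /y subrK.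
by rewrite shiftN // /y subrK.
Qed.

Lemma cell_red (R : realType) (d : nat) (L : R) (m : 'rV[R]_d -> R) :
  0 < L -> @Defs.periodic R d L m -> forall x, exists y,
    m y = m x /\ forall i, 0 <= y ord0 i <= L.
Proof.
move=> L0 per x.
suff : forall p, (p <= d)%N -> exists y, m y = m x /\
  forall i : 'I_d, (i < p)%N -> 0 <= y ord0 i <= L.
  by case/(_ d (leqnn d)) => y [my hy]; exists y; split => // i; exact: hy.
elim=> [|p IH] hp; first by exists x.
have [y [my hy]] := IH (ltnW hp).
pose i := Ordinal hp.
pose z := Num.floor (y ord0 i / L).
exists (y + ((- z)%:~R * L) *: evec i); split.
  by rewrite shiftZ.
move=> j hj; rewrite !mxE.
have -> : (ord0 == 0 :> 'I_1) = true by [].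
rewrite andTb.
have [eij|nij] := eqVneq j i.
  rewrite eij mulr1 mulrNz mulNr.
  have := mem_rg1_floor (y ord0 i / L); rewrite /= -/z.
  move=> /andP [h1 h2].
  have h1' : z%:~R * L <= y ord0 i by rewrite -ler_pdivlMr.
  have h2' : y ord0 i < (z%:~R + 1) * L by rewrite -ltr_pdivrMr.
  apply/andP; split; nra.
rewrite mulr0 addr0; apply: hy.
move: hj; rewrite ltnS leq_eqVlt => /orP [/eqP hj|//].
by case/eqP: nij; apply: val_inj; rewrite /= hj.
Qed.

Lemma UC_rV (R : realType) (d : nat) (L : R) (f : 'rV[R]_d -> R) :
  continuous f -> @UC R L d (fun s => f (\row_(i < d) nth 0 s i)).
Proof.
move=> cf e e0.
pose K := [set v : 'rV[R]_d | forall i, (`[0, L]%classic : set R) (v ord0 i)].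
have cK : compact K := @rV_compact _ d (fun _ => (`[0, L]%classic : set R)) (fun _ => @segment_compact R 0 L).
have [dl dl0 H] := @HC R d K f cK cf e e0; exists dl => // s s' cs cs' hs.
apply: H.
- move=> i; rewrite mxE; move: cs => /andP [/eqP sz /all_nthP].
  by move=> /(_ 0 i); rewrite sz => /(_ (ltn_ord i)) h; rewrite /= in_itv.
- by move=> i; rewrite !mxE; exact: hs.
Qed.

Lemma Fpot_cont (R : realType) : continuous (@Fpot R).
Proof.
have c1 : continuous (fun t : R => t - 1).
  by move=> t; apply: cvgB; [exact: cvg_id|exact: cvg_cst].
have c2 : continuous (fun t : R => t ^+ 2) by exact: exprn_continuous.
have c3 : continuous (fun t : R => t / 4) by exact: mulrr_continuous.
have -> : @Fpot R = (fun t => t / 4) \o (fun t => t ^+ 2) \o (fun t => t - 1) \o (fun t => t ^+ 2).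
  by apply: funext => t.
move=> x; apply: continuous_comp; first exact: c2.
apply: continuous_comp; first exact: c1.
apply: continuous_comp; first exact: c2.
exact: c3.
Qed.

Theorem lemma3p2 (R : realType) (d : nat) (L n : R) (m : 'rV[R]_d -> R) :
  (2 <= d)%N -> 0 < L -> -1 < n < 1 ->
  minimizer L n m ->
  (exists x y, m x != m y) ->
  let delta := n + 1 in
  exists x : 'rV[R]_d,
    1 - delta - 2 * Num.sqrt delta * Num.sqrt (1 - delta / 2) <= m x.
Proof.
move=> d2 L0 /andP [n1 n2] [[per diff dcont] mn minim] [x1 [y1 nxy]] delta.
set r := 2 * Num.sqrt delta * Num.sqrt (1 - delta / 2).
have r0 : 0 <= r by rewrite mulr_ge0 ?mulr_ge0 ?sqrtr_ge0.
have r2 : r ^+ 2 = 2 - 2 * n ^+ 2.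
  rewrite /r !exprMn !sqr_sqrtr /delta.
  - by field.
  - by rewrite subr_ge0 ler_pdivrMr //; lra.
  - lra.
suff [x hx] : exists x, - n - r <= m x.
  by exists x; move: hx; rewrite /delta; lra.
case: (pselect (exists x, - n - r <= m x)) => // Hn.
have lt_thr : forall x, m x < - n - r.
  move=> x; rewrite ltNge; apply/negP => h; apply: Hn; exists x.
  by [].
exfalso.
pose row := fun s : seq R => \row_(i < d) nth 0 s i.
have cm : continuous m := fun x => differentiable_continuous (diff x).
have cFm : continuous (fun x => Fpot (m x)).
  by move=> x; apply: continuous_comp; [exact: cm|exact: Fpot_cont].
have uM : UC R L d (fun s => m (row s)) := UC_rV _ _ _ _ cm.
have uF : UC R L d (fun s => Fpot (m (row s))) := UC_rV _ _ _ _ cFm.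
pose B := n * (n ^+ 2 - 1).
pose H := fun s => (Fpot n - B * n) - (- B) * m (row s).
have uH : UC R L d H := UC_B _ _ _ _ _ (UC_cst _ _ _ _) (UC_Z _ _ _ _ _ uM).
pose g := fun s => Fpot (m (row s)) - H s.
have ug : UC R L d g := UC_B _ _ _ _ _ uF uH.
have Ld : L ^+ d != 0 by rewrite expf_neq0 // gt_eqF.
have Im : iter_int L d (fun s => m (row s)) = n * L ^+ d.
  by rewrite -mn /mean /torus_int divfK.
have IH : iter_int L d H = Fpot n * L ^+ d.
  rewrite /H (@LinB R L L0 d _ _ (UC_cst _ _ _ _) (UC_Z _ _ _ _ _ uM)).
  rewrite iter_cst // (@LinZ R L L0 d _ _ uM) Im /B; ring.
have gz : forall x, grad_sq (fun _ : 'rV[R]_d => n) x = 0.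
  move=> x; rewrite /grad_sq big1 // => i _.
  by rewrite (derive_cst n) expr0n.
have admc : admissible L (fun _ : 'rV[R]_d => n).
  split.
  - by [].
  - by move=> x; exact: differentiable_cst.
  - move=> i; have -> : (fun x => 'D_(evec i) (fun _ : 'rV[R]_d => n) x) = (fun _ => 0).
      by apply: funext => x; rewrite (derive_cst n).
    exact: cst_continuous.
have meanc : mean L (fun _ : 'rV[R]_d => n) = n.
  by rewrite /mean /torus_int iter_cst // mulfK.
have Ec : energy L (fun _ : 'rV[R]_d => n) = Fpot n * L ^+ d.
  rewrite /energy /torus_int.
  have -> : (fun s : seq R => grad_sq (fun _ : 'rV[R]_d => n) (\row_(i < d) nth 0 s i) / 2) = (fun _ => 0).
    by apply: funext => s; rewrite gz mul0r.
  by rewrite !iter_cst // mul0r add0r.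
have Em := minim _ admc meanc.
rewrite Ec /energy /torus_int in Em.
have T1 : 0 <= iter_int L d (fun s => grad_sq m (row s) / 2).
  apply: iter_ge0 => s _; apply: divr_ge0 => //.
  by apply: sumr_ge0 => i _; exact: sqr_ge0.
have Ig : iter_int L d g <= 0.
  rewrite /g (@LinB R L L0 d _ _ uF uH) IH.
  move: Em T1; rewrite /row; lra.
have key : forall v, Fpot v - ((Fpot n - B * n) - (- B) * v) =
    (v - n) ^+ 2 * ((v + n) ^+ 2 - r ^+ 2) / 4.
  by move=> v; rewrite r2 /Fpot /B; field.
have qpos : forall v, v < - n - r -> 0 < (v + n) ^+ 2 - r ^+ 2.
  move=> v hv; rewrite subr_gt0; nra.
have g0 : forall s, cell R L d s -> 0 <= g s.
  move=> s _; rewrite /g /H key; apply: divr_ge0 => //.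
  by apply: mulr_ge0; [exact: sqr_ge0| exact/ltW/qpos/lt_thr].
have [x0 hx0] : exists x0, m x0 != n.
  case: (eqVneq (m x1) n) => h; last by exists x1.
  by exists y1; rewrite -h eq_sym.
have [y [my hy]] := @cell_red R d L m L0 per x0.
pose s0 := [seq y ord0 i | i <- enum 'I_d].
have rs0 : row s0 = y.
  apply/rowP => i; rewrite mxE (nth_map i) ?size_enum_ord //.
  by rewrite nth_ord_enum (ord1 ord0).
have cs0 : cell R L d s0.
  rewrite /cell size_map size_enum_ord eqxx /=.
  by apply/allP => t /mapP [i _ ->]; exact: hy.
have gs0 : 0 < g s0.
  rewrite /g /H key rs0; apply: divr_gt0 => //; apply: mulr_gt0.
  - by rewrite lt0r sqrf_eq0 sqr_ge0 andbT subr_eq0 my.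
  - exact/qpos/lt_thr.
have := @posI R L L0 d g s0 ug g0 cs0 gs0.
lra.
Qed.
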